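(* Let $G:\mathbb{R}^n\to\mathbb{R}^m$ be continuously differentiable and define $H:\mathbb{R}^n\to\mathbb{R}^{n+m}$ by $H(v)=\begin{bmatrix} v\\ G(v)\end{bmatrix}$, so that $\nabla H(v)=\begin{bmatrix}I_n\\ \nabla G(v)\end{bmatrix}$. Fix $v_{\mathrm{ref}}\in\mathbb{R}^n$ and let $\nabla G(v_{\mathrm{ref}})=\Psi\Lambda\Phi^\top$ be a reduced singular value decomposition, where $r$ is the rank of $\nabla G(v_{\mathrm{ref}})$, $\Psi\in\mathbb{R}^{m\times r}$ and $\Phi\in\mathbb{R}^{n\times r}$ have orthonormal columns, and $\Lambda\in\mathbb{R}^{r\times r}$ is diagonal with positive diagonal entries. Define $$\widetilde Q=\nabla H(v_{\mathrm{ref}})\big(\nabla H(v_{\mathrm{ref}})^\top\nabla H(v_{\mathrm{ref}})\big)^{-1/2}\in\mathbb{R}^{(n+m)\times n}$$ (the orthonormal factor of the polar decomposition of $\nabla H(v_{\mathrm{ref}})$). Then: (i) For $\xi\in\mathbb{R}^n$, the nonlinear system $\widetilde Q^\top H(v)=\xi$ is equivalent to the system $$(I_n-\Phi\Phi^\top)\xi=(I_n-\Phi\Phi^\top)v,\qquad \Phi\Phi^\top\xi=\Phi\Big[(\Lambda^2+I_r)^{-1/2}\big(\Phi^\top v+\Lambda\Psi^\top G(v)\big)\Big].$$ (ii) The function $$w(v)=\big|\det(\widetilde Q^\top\nabla H(v))\big|^{-1}\exp\Big(-\tfrac12\|H(v)\|^2+\tfrac12\|\widetilde Q^\top H(v)\|^2\Big)$$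 can be written as $$w(v)=\big|\det(\widetilde Q^\top\nabla H(v))\big|^{-1}\exp\Big(-\tfrac12\|G(v)\|^2-\tfrac12\|\Phi^\top v\|^2+\tfrac12\big\|(\Lambda^2+I_r)^{-1/2}\big(\Phi^\top v+\Lambda\Psi^\top G(v)\big)\big\|^2\Big),$$ where $$\big|\det(\widetilde Q^\top\nabla H(v))\big|=\big|\det(\Lambda^2+I_r)^{-1/2}\big|\,\big|\det\big(I_r+\Lambda\Psi^\top\nabla G(v)\Phi\big)\big|.$$
   Context: $\|\cdot\|$ denotes the Euclidean norm; $I_k$ the $k\times k$ identity matrix. The function $w$ is the importance weight (target density over RTO proposal density, up to constants) for the randomize-then-optimize (RTO) proposal built with the orthonormal basis $\widetilde Q$ of the range of $\nabla H(v_{\mathrm{ref}})$, for the target density $\pi(v)\propto\exp(-\frac12\|H(v)\|^2)$. *)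

(* Defs.v *)
From HB Require Import structures.
From mathcomp Require Import all_boot all_order all_algebra.
From mathcomp Require Import all_classical all_reals all_analysis.
Set Implicit Arguments. Unset Strict Implicit. Unset Printing Implicit Defensive.
Import Order.TTheory GRing.Theory Num.Theory.
Import numFieldNormedType.Exports.
Local Open Scope ring_scope.
Local Open Scope classical_set_scope.

Section Defs.
Variable R : realType.

(* Jacobian (gradient) of f : R^n -> R^m (column vectors) at v, as an
   m x n matrix: column j is the differential of f at v applied to e_j. *)
Definition gradmx n m (f : 'cV[R]_n -> 'cV[R]_m) (v : 'cV[R]_n) : 'M[R]_(m, n) :=
  \matrix_(i < m, j < n) ('d f v (delta_mx j 0 : 'cV[R]_n)) i 0.

Definition C1 n m (f : 'cV[R]_n -> 'cV[R]_m) : Prop :=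
  (forall v, differentiable f v) /\ continuous (gradmx f).

Definition posdefmx k (A : 'M[R]_k) : Prop :=
  A^T = A /\ forall x : 'cV[R]_k, x != 0 -> 0 < (x^T *m A *m x) 0 0.

(* A^{-1/2}: the unique symmetric positive definite S with S S A = I
   (i.e. S = (A^{1/2})^{-1}); chosen by description, 0 if none exists. *)
Definition invsqrtmx k (A : 'M[R]_k) : 'M[R]_k :=
  xget 0 [set S : 'M[R]_k | posdefmx S /\ S *m S *m A = 1%:M].

Definition sqnorm k (x : 'cV[R]_k) : R := \sum_(i < k) (x i 0) ^+ 2.

Definition Hmap n m (G : 'cV[R]_n -> 'cV[R]_m) (v : 'cV[R]_n) : 'cV[R]_(n + m) :=
  col_mx v (G v).

Definition Qtilde n m (G : 'cV[R]_n -> 'cV[R]_m) (vref : 'cV[R]_n) : 'M[R]_(n + m, n) :=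
  let DH := gradmx (Hmap G) vref in DH *m invsqrtmx (DH^T *m DH).

Definition rto_weight n m (G : 'cV[R]_n -> 'cV[R]_m) (vref v : 'cV[R]_n) : R :=
  let Q := Qtilde G vref in
  `|\det (Q^T *m gradmx (Hmap G) v)|^-1 *
  expR (- (sqnorm (Hmap G v)) / 2 + sqnorm (Q^T *m Hmap G v) / 2).

End Defs.

(* Main.v *)
Require Import Defs.
From HB Require Import structures.
From mathcomp Require Import all_boot all_order all_algebra.
From mathcomp Require Import all_classical all_reals all_analysis.
Import Order.TTheory GRing.Theory Num.Theory.
Import numFieldNormedType.Exports.
Local Open Scope ring_scope.

Section A.
Variable R : realType.

Definition colu p q (v : 'M[R]_(p,1)) : 'M[R]_(p + q, 1) := col_mx v 0.
Definition cold p q (v : 'M[R]_(q,1)) : 'M[R]_(p + q, 1) := col_mx 0 v.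

Lemma colu_lin p q : linear (@colu p q).
Proof. by move=> a x y; rewrite /colu scale_col_mx add_col_mx scaler0 addr0. Qed.
Lemma cold_lin p q : linear (@cold p q).
Proof. by move=> a x y; rewrite /cold scale_col_mx add_col_mx scaler0 addr0. Qed.
HB.instance Definition _ p q := GRing.isLinear.Build _ _ _ _ (@colu p q) (@colu_lin p q).
HB.instance Definition _ p q := GRing.isLinear.Build _ _ _ _ (@cold p q) (@cold_lin p q).

Lemma colu_cont p q : continuous (@colu p q).
Proof.
move=> M s /= /(nbhs_ballP _) [e e0 es].
apply/nbhs_ballP; exists e => // N [_ MN]; apply: es; split => // i j.
rewrite !mxE; case: splitP => k _; [exact: MN| rewrite mxE; exact: ballxx].
Qed.
Lemma cold_cont p q : continuous (@cold p q).
Proof.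
move=> M s /= /(nbhs_ballP _) [e e0 es].
apply/nbhs_ballP; exists e => // N [_ MN]; apply: es; split => // i j.
rewrite !mxE; case: splitP => k _; [rewrite mxE; exact: ballxx|exact: MN].
Qed.

Lemma d_Hmap n m (G : 'cV[R]_n -> 'cV[R]_m) v : differentiable G v ->
  'd (Hmap G) v = (fun e => col_mx e ('d G v e)) :> ('cV[R]_n -> 'cV[R]_(n + m)).
Proof.
move=> dG.
have HE : forall x (y : 'cV[R]_m), col_mx x y = @colu n m x + @cold n m y.
  by move=> x y; rewrite /colu /cold add_col_mx addr0 add0r.
have -> : Hmap G = @colu n m + (@cold n m \o G).
  by apply/funext => x; rewrite /Hmap HE.
have d1 : differentiable (@colu n m) v by apply: linear_differentiable; apply: colu_cont.
have d2 : differentiable (@cold n m) (G v) by apply: linear_differentiable; apply: cold_cont.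
rewrite diffD //; last exact: differentiable_comp.
have h3 := diff_comp dG d2.
have h1 : 'd (colu n m) v = colu n m :> (_ -> _) := diff_lin v (colu_cont n m).
have h2 : 'd (cold n m) (G v) = cold n m :> (_ -> _) := diff_lin (G v) (cold_cont n m).
apply/funext => e.
have h3e := congr1 (fun f => f e) h3.
have h1e := congr1 (fun f => f e) h1.
have h2e := congr1 (fun f => f ('d G v e)) h2.
simpl in h3e, h1e, h2e.
have -> : ('d (colu n m) v \+ 'd (cold n m \o G) v) e = 'd (colu n m) v e + 'd (cold n m \o G) v e by [].
transitivity (colu n m e + cold n m ('d G v e)); last by rewrite HE.
congr (_ + _).
  exact: h1e.
exact: (etrans h3e h2e).
Qed.

Lemma gradmx_Hmap n m (G : 'cV[R]_n -> 'cV[R]_m) v : differentiable G v ->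
  gradmx (Hmap G) v = col_mx 1%:M (gradmx G v).
Proof.
move=> dG; apply/matrixP => i j; rewrite /gradmx !mxE (@d_Hmap n m G v dG) /= mxE.
case: splitP => k _; rewrite !mxE ?eqxx ?andbT //.
Qed.
End A.
From mathcomp Require Import lra.

Section LA.
Variable R : realType.

Lemma sylvester n r (A : 'M[R]_(n, r)) (B : 'M[R]_(r, n)) :
  \det (1%:M + A *m B) = \det (1%:M + B *m A).
Proof.
pose M := block_mx (1%:M : 'M[R]_n) (- A) B (1%:M : 'M[R]_r).
have e1 : block_mx 1%:M A 0 1%:M *m M = block_mx (1%:M + A *m B) 0 B 1%:M.
  rewrite mulmx_block !mul1mx !mul0mx !mulmx1 ?add0r ?addr0.
  by congr block_mx => //; rewrite addNr.
have e2 : block_mx 1%:M 0 (- B) 1%:M *m M = block_mx 1%:M (- A) 0 (1%:M + B *m A).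
  rewrite mulmx_block !mul1mx !mul0mx !mulmx1 ?add0r ?addr0.
  congr block_mx => //; first by rewrite addNr.
  by rewrite mulNmx mulmxN opprK addrC.
have := congr1 determinant e1; have := congr1 determinant e2.
rewrite !det_mulmx det_ublock det_lblock !det1 !mul1r ?mulr1 det_ublock det_lblock !det1 ?mul1r ?mulr1.
by move=> -> ->.
Qed.

Lemma quad_diag k (X S : 'M[R]_k) j :
  (X^T *m S *m X) j j = ((col j X)^T *m S *m col j X) 0 0.
Proof.
rewrite !mxE; apply: eq_bigr => a _; rewrite !mxE; congr (_ * _).
by apply: eq_bigr => b _; rewrite !mxE.
Qed.

Lemma quad1_ge0 k (x : 'cV[R]_k) : 0 <= (x^T *m x) 0 0.
Proof. rewrite mxE; apply: sumr_ge0 => i _; rewrite mxE -expr2; exact: sqr_ge0. Qed.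

Lemma quad1_gt0 k (x : 'cV[R]_k) : x != 0 -> 0 < (x^T *m x) 0 0.
Proof.
move=> x0; have [i xi] : exists i, x i 0 != 0.
  apply/existsP; apply: contraR x0 => /existsPn H; apply/eqP/matrixP => a b.
  by rewrite (ord1 b) mxE; apply/eqP; rewrite -[_ == _]negbK H.
rewrite mxE (bigD1 i) //= mxE -expr2; apply: ltr_pwDl; first by rewrite lt_def sqr_ge0 andbT sqrf_eq0.
by apply: sumr_ge0 => a _; rewrite mxE -expr2; exact: sqr_ge0.
Qed.

Lemma quad_ge0 k (S : 'M[R]_k) (x : 'cV[R]_k) : posdefmx S -> 0 <= (x^T *m S *m x) 0 0.
Proof.
move=> [_ H]; have [->|x0] := eqVneq x 0; last exact/ltW/H.
by rewrite mulmx0 mxE.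
Qed.

Lemma tr_quad_ge0 k (S X : 'M[R]_k) : posdefmx S -> 0 <= \tr (X^T *m S *m X).
Proof. by move=> pS; apply: sumr_ge0 => j _; rewrite quad_diag; exact: (@quad_ge0 k S _ pS). Qed.

Lemma tr_quad0 k (S X : 'M[R]_k) : posdefmx S -> \tr (X^T *m S *m X) = 0 -> X = 0.
Proof.
move=> pS h0.
have h0' : \sum_j ((col j X)^T *m S *m col j X) 0 0 = 0.
  transitivity (\tr (X^T *m S *m X)); last exact: h0.
  by rewrite /mxtrace; apply: eq_bigr => j _; rewrite quad_diag.
have H := @psumr_eq0P _ _ xpredT (fun j => ((col j X)^T *m S *m col j X) 0 0)
  (fun j _ => @quad_ge0 k S (col j X) pS) h0'.
apply/matrixP => i j; rewrite mxE.
have : col j X = 0.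
  apply/eqP; apply: contraT => cj; have [_ /(_ _ cj)] := pS.
  by rewrite (H j isT) ltxx.
by move/matrixP/(_ i 0); rewrite !mxE.
Qed.

Lemma uniq_invsqrt k (A S1 S2 : 'M[R]_k) : posdefmx S1 -> posdefmx S2 ->
  S1 *m S1 *m A = 1%:M -> S2 *m S2 *m A = 1%:M -> S1 = S2.
Proof.
move=> p1 p2 h1 h2.
have e : S1 *m S1 = S2 *m S2.
  have h2' := mulmx1C h2.
  by rewrite -[S1 *m S1]mulmx1 -h2' mulmxA h1 mul1mx.
pose D := S1 - S2.
have DT : D^T = D by rewrite /D linearB /= p1.1 p2.1.
have E : S1 *m D + D *m S2 = 0.
  by rewrite /D mulmxBr mulmxBl e addrA subrK subrr.
have E2 : \tr (D^T *m S1 *m D) + \tr (D^T *m S2 *m D) = 0.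
  have -> : \tr (D^T *m S2 *m D) = \tr (D^T *m (D *m S2)).
    by rewrite DT mxtrace_mulC.
  by rewrite -mulmxA -raddfD /= -mulmxDr E mulmx0 raddf0.
have t1 := @tr_quad_ge0 k S1 D p1; have t2 := @tr_quad_ge0 k S2 D p2.
have : \tr (D^T *m S1 *m D) = 0 by lra.
move/(@tr_quad0 k S1 D p1) => /eqP; rewrite /D subr_eq0 => /eqP //.
Qed.

Lemma diag_witness r (lam : 'rV[R]_r) : exists S : 'M[R]_r, posdefmx S /\
  S *m S *m (diag_mx lam *m diag_mx lam + 1%:M) = 1%:M.
Proof.
pose w := \row_i (Num.sqrt (lam 0 i ^+ 2 + 1))^-1.
have wpos i : 0 < (Num.sqrt (lam 0 i ^+ 2 + 1))^-1 by rewrite invr_gt0 sqrtr_gt0 ltr_pwDr // sqr_ge0.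
exists (diag_mx w); split; first split; first exact: tr_diag_mx.
  move=> x x0; rewrite -mulmxA mul_diag_mx.
  have [i xi] : exists i, x i 0 != 0.
    apply/existsP; apply: contraR x0 => /existsPn H; apply/eqP/matrixP => a b.
    by rewrite (ord1 b) mxE; apply/eqP; rewrite -[_ == _]negbK H.
  rewrite mxE (bigD1 i) //= !mxE; apply: ltr_pwDl.
    rewrite mulrCA -expr2 mulr_gt0 //.
    by rewrite lt_def sqr_ge0 andbT sqrf_eq0.
  apply: sumr_ge0 => a _; rewrite !mxE mulrCA -expr2 mulr_ge0 ?sqr_ge0 //.
apply/matrixP => i j; rewrite [diag_mx lam *m _]mulmx_diag mulmx_diag mul_diag_mx !mxE.
have [->|ij] := eqVneq i j; last by rewrite !mulr0n addr0 mulr0.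
rewrite !mulr1n -invfM -!expr2 sqr_sqrtr ?addr_ge0 ?sqr_ge0 // mulVf //.
by rewrite gt_eqF // ltr_pwDr // sqr_ge0.
Qed.

Lemma entD p q (A B : 'M[R]_(p, q)) i j : (A + B) i j = A i j + B i j.
Proof. by rewrite mxE. Qed.
Lemma entN p q (A : 'M[R]_(p, q)) i j : (- A) i j = - A i j.
Proof. by rewrite mxE. Qed.

Section Tsec.
Variables (n r : nat) (Phi : 'M[R]_(n, r)) (Ss L : 'M[R]_r).
Hypothesis hPhi : Phi^T *m Phi = 1%:M.
Variable Pc : 'M[R]_n.
Hypothesis hPc : Pc = 1%:M - Phi *m Phi^T.
Lemma f4 p (X : 'M[R]_(p, r)) : X *m Phi^T *m Phi = X.
Proof. by rewrite -mulmxA hPhi mulmx1. Qed.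
Lemma f1' : Pc *m Phi = 0.
Proof. by rewrite hPc mulmxBl mul1mx f4 subrr. Qed.
Lemma f1 p (X : 'M[R]_(p, n)) : X *m Pc *m Phi = 0.
Proof. by rewrite -mulmxA f1' mulmx0. Qed.
Lemma f2' : Phi^T *m Pc = 0.
Proof. by rewrite hPc mulmxBr mulmx1 mulmxA hPhi mul1mx subrr. Qed.
Lemma f2 p (X : 'M[R]_(p, r)) : X *m Phi^T *m Pc = 0.
Proof. by rewrite -mulmxA f2' mulmx0. Qed.
Lemma f3' : Pc *m Pc = Pc.
Proof. by rewrite {1}hPc mulmxBl mul1mx -mulmxA f2' mulmx0 subr0. Qed.
Lemma f3 p (X : 'M[R]_(p, n)) : X *m Pc *m Pc = X *m Pc.
Proof. by rewrite -mulmxA f3'. Qed.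
Lemma PcT : Pc^T = Pc.
Proof. by rewrite hPc linearB /= trmx1 trmx_mul trmxK. Qed.
Lemma PcP : Pc + Phi *m Phi^T = 1%:M.
Proof. by rewrite hPc subrK. Qed.

Lemma TT_eq : (Pc + Phi *m Ss *m Phi^T) *m (Pc + Phi *m Ss *m Phi^T) =
  Pc + Phi *m (Ss *m Ss) *m Phi^T.
Proof.
rewrite mulmxDl !mulmxDr !mulmxA f3' f1' f2 f4 !mul0mx addr0 add0r.
done.
Qed.

Lemma TTA_eq : Ss *m Ss *m (L + 1%:M) = 1%:M ->
  (Pc + Phi *m (Ss *m Ss) *m Phi^T) *m (1%:M + Phi *m L *m Phi^T) = 1%:M.
Proof.
move=> hS.
have e : Phi *m (Ss *m Ss) *m Phi^T + Phi *m (Ss *m Ss) *m Phi^T *m (Phi *m L *m Phi^T)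
    = Phi *m Phi^T.
  have -> : Phi *m Phi^T = Phi *m (Ss *m Ss *m (L + 1%:M)) *m Phi^T by rewrite hS mulmx1.
  by rewrite !mulmxA f4 !mulmxDr !mulmxDl ?mulmxA ?mulmx1 addrC.
by rewrite mulmxDl !mulmxDr !mulmx1 e !mulmxA f1' !mul0mx addr0 PcP.
Qed.


Lemma T_posdef : posdefmx Ss -> posdefmx (Pc + Phi *m Ss *m Phi^T).
Proof.
move=> [SsT Sspos]; split.
  by rewrite linearD /= PcT !trmx_mul trmxK SsT mulmxA.
move=> x x0.
have E : x^T *m (Pc + Phi *m Ss *m Phi^T) *m x =
    (Pc *m x)^T *m (Pc *m x) + (Phi^T *m x)^T *m Ss *m (Phi^T *m x).
  by rewrite mulmxDr mulmxDl !trmx_mul trmxK PcT !mulmxA f3.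
rewrite E entD.
have [z|nz] := eqVneq (Phi^T *m x) 0.
  have -> : Pc *m x = x by rewrite hPc mulmxBl mul1mx -mulmxA z mulmx0 subr0.
  rewrite z mulmx0; have -> : (0 : 'M[R]_1) 0 0 = 0 by rewrite mxE.
  by rewrite addr0; exact: quad1_gt0.
have a := @quad1_ge0 n (Pc *m x); have b := Sspos _ nz; lra.
Qed.
End Tsec.
End LA.

Lemma sqnormE (R : realType) k (x : 'cV[R]_k) : sqnorm x = (x^T *m x) 0 0.
Proof. by rewrite /sqnorm mxE; apply: eq_bigr => i _; rewrite mxE expr2. Qed.

Theorem proposition3p1 (R : realType) (n m : nat)
  (G : 'cV[R]_n -> 'cV[R]_m) (vref : 'cV[R]_n) (r : nat)
  (Psi : 'M[R]_(m, r)) (Phi : 'M[R]_(n, r)) (lam : 'rV[R]_r) :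
  C1 G ->
  r = \rank (gradmx G vref) ->
  Psi^T *m Psi = 1%:M ->
  Phi^T *m Phi = 1%:M ->
  (forall i, 0 < lam 0 i) ->
  gradmx G vref = Psi *m diag_mx lam *m Phi^T ->
  let Lam := diag_mx lam in
  let Q := Qtilde G vref in
  let S := invsqrtmx (Lam *m Lam + 1%:M) in
  let P := Phi *m Phi^T in
  (forall (xi v : 'cV[R]_n),
      Q^T *m Hmap G v = xi <->
      ((1%:M - P) *m xi = (1%:M - P) *m v /\
       P *m xi = Phi *m (S *m (Phi^T *m v + Lam *m (Psi^T *m G v))))) /\
  (forall v : 'cV[R]_n,
      rto_weight G vref v =
        `|\det (Q^T *m gradmx (Hmap G) v)|^-1 *
        expR (- (sqnorm (G v)) / 2 - sqnorm (Phi^T *m v) / 2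
              + sqnorm (S *m (Phi^T *m v + Lam *m (Psi^T *m G v))) / 2)) /\
  (forall v : 'cV[R]_n,
      `|\det (Q^T *m gradmx (Hmap G) v)| =
        `|\det S| * `|\det (1%:M + Lam *m Psi^T *m gradmx G v *m Phi)|).
Proof.
move=> [dG _] _ hPsi hPhi _ hJ0 Lam Q S P.
have hS : posdefmx S /\ S *m S *m (Lam *m Lam + 1%:M) = 1%:M.
  exact: (@xgetPex _ 0 [set X : 'M[R]_r | posdefmx X /\ X *m X *m (Lam *m Lam + 1%:M) = 1%:M]
    (@diag_witness R r lam)).
have hLT : Lam^T = Lam by exact: tr_diag_mx.
have hJ : gradmx G vref = Psi *m Lam *m Phi^T by [].
rewrite /Q /P; clearbody S Lam; clear hJ0 Q P.
set Pc := 1%:M - Phi *m Phi^T.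
have hPc : Pc = 1%:M - Phi *m Phi^T by [].
clearbody Pc.
have F1 := @f1' R n r Phi hPhi _ hPc.
have F2 := @f2 R n r Phi hPhi _ hPc.
have F3 := @f3' R n r Phi hPhi _ hPc.
have F4 := @f4 R n r Phi hPhi.
have FP := @PcP R n r Phi _ hPc.
pose T := Pc + Phi *m S *m Phi^T.
have DHE : gradmx (Hmap G) vref = col_mx 1%:M (gradmx G vref) := @gradmx_Hmap R n m G vref (dG vref).
have DHTDH : (gradmx (Hmap G) vref)^T *m gradmx (Hmap G) vref
    = 1%:M + Phi *m (Lam *m Lam) *m Phi^T.
  rewrite DHE tr_col_mx mul_row_col trmx1 mul1mx hJ !trmx_mul hLT trmxK.
  by rewrite !mulmxA -[_ *m Psi^T *m Psi]mulmxA hPsi mulmx1.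
have inT : posdefmx T /\ T *m T *m (1%:M + Phi *m (Lam *m Lam) *m Phi^T) = 1%:M.
  split; first exact: (@T_posdef R n r Phi S hPhi _ hPc hS.1).
  by rewrite (@TT_eq R n r Phi S hPhi _ hPc) (@TTA_eq R n r Phi S _ hPhi _ hPc hS.2).
have hT : invsqrtmx ((gradmx (Hmap G) vref)^T *m gradmx (Hmap G) vref) = T.
  rewrite DHTDH.
  have inX := @xgetPex _ 0 [set X : 'M[R]_n | posdefmx X /\ X *m X *m (1%:M + Phi *m (Lam *m Lam) *m Phi^T) = 1%:M] (ex_intro _ T inT).
  exact: (@uniq_invsqrt R n _ _ _ inX.1 inT.1 inX.2 inT.2).
have TT : T^T = T := inT.1.1.
have hQT : (Qtilde G vref)^T = T *m row_mx 1%:M (Phi *m Lam *m Psi^T).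
  rewrite /Qtilde /= hT DHE trmx_mul TT tr_col_mx trmx1 hJ !trmx_mul trmxK hLT.
  by rewrite mulmxA.
have F1x := @f1 R n r Phi hPhi _ hPc.
have F2x := @f2 R n r Phi hPhi _ hPc.
have F3x := @f3 R n r Phi hPhi _ hPc.
have PT := @PcT R n r Phi _ hPc.
have hv : forall v, (Qtilde G vref)^T *m Hmap G v =
    Pc *m v + Phi *m (S *m (Phi^T *m v + Lam *m (Psi^T *m G v))).
  move=> v; rewrite hQT /Hmap -[T *m _ *m _]mulmxA mul_row_col mul1mx /T.
  by rewrite mulmxDl !mulmxDr !mulmxA F1 !mul0mx addr0 F4.
split.
  move=> xi v; rewrite hv; split.
    move=> <-; split.
      by rewrite mulmxDr !mulmxA F3 F1 !mul0mx addr0.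
    by rewrite !mulmxDr !mulmxA F2x !mul0mx add0r F4.
  case=> h1 h2.
  by rewrite -[xi]mul1mx -FP mulmxDl h1 h2.
split.
  move=> v; rewrite /rto_weight /= hv; congr (_ * expR _).
  set z := S *m _.
  have e1 : sqnorm (Hmap G v) = sqnorm v + sqnorm (G v).
    by rewrite !sqnormE /Hmap tr_col_mx mul_row_col entD.
  have M : (Pc *m v + Phi *m z)^T *m (Pc *m v + Phi *m z) =
      v^T *m v - (Phi^T *m v)^T *m (Phi^T *m v) + z^T *m z.
    have -> : (Pc *m v + Phi *m z)^T = v^T *m Pc^T + z^T *m Phi^T.
      by rewrite -!trmx_mul; apply/matrixP => i j; rewrite !mxE.
    rewrite mulmxDl !mulmxDr PT !mulmxA F3x F1x F2x F4 !mul0mx addr0 add0r.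
    by rewrite hPc mulmxBr mulmx1 mulmxBl [(Phi^T *m v)^T]trmx_mul trmxK !mulmxA.
  have e2 : sqnorm (Pc *m v + Phi *m z) = sqnorm v - sqnorm (Phi^T *m v) + sqnorm z.
    by rewrite !sqnormE M !entD entN.
  rewrite e1 e2; lra.
move=> v.
rewrite hQT (@gradmx_Hmap R n m G v (dG v)) -[T *m _ *m _]mulmxA mul_row_col mul1mx /T det_mulmx normrM.
congr (_ * _); f_equal.
  have -> : Pc + Phi *m S *m Phi^T = 1%:M + Phi *m ((S - 1%:M) *m Phi^T).
    by rewrite hPc mulmxBl mul1mx mulmxBr mulmxA [RHS]addrA addrAC.
  by rewrite sylvester -mulmxA hPhi mulmx1 addrC subrK.
have -> : Phi *m Lam *m Psi^T *m gradmx G v = Phi *m (Lam *m Psi^T *m gradmx G v).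
  by rewrite !mulmxA.
by rewrite sylvester.
Qed.
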